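(* Let $X$ be a random variable with CIGF $G_X$. Then $$G_X(\alpha,\beta)\le K_X(\beta)-\alpha K_X(\beta+1)\quad\text{for all }(\alpha,\beta)\in D_X\text{ with }\alpha\in[0,1],$$ $$G_X(\alpha,\beta)\le H_X(\alpha)-\beta H_X(\alpha+1)\quad\text{for all }(\alpha,\beta)\in D_X\text{ with }\beta\in[0,1].$$
   Context: For a random variable $X$ with CDF $F$ and survival function $\overline F=1-F$, let $l=\inf\{x:F(x)>0\}$, $r=\sup\{x:\overline F(x)>0\}$. The CIGF of $X$ is $G_X(\alpha,\beta)=\int_l^r [F(x)]^\alpha[\overline F(x)]^\beta\,dx$ on $D_X=\{(\alpha,\beta)\in\mathbb{R}^2: G_X(\alpha,\beta)<\infty\}$. The cumulative information generating measure is $H_X(\alpha)=G_X(\alpha,0)=\int_l^r[F(x)]^\alpha dx$ and the cumulative residual information generating measure is $K_X(\beta)=G_X(0,\beta)=\int_l^r[\overline F(x)]^\beta dx$. *)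

(* Defs.v *)
From HB Require Import structures.
From mathcomp Require Import all_boot all_order all_algebra.
From mathcomp Require Import all_classical all_reals all_analysis.
Set Implicit Arguments. Unset Strict Implicit. Unset Printing Implicit Defensive.
Import Order.TTheory GRing.Theory Num.Theory.
Import numFieldNormedType.Exports.
Local Open Scope classical_set_scope.
Local Open Scope ring_scope.

Section CIGF.
Context {d : measure_display} {T : measurableType d} {R : realType}
  (P : probability T R) (X : {RV P >-> R}).

Definition cdf (x : R) : R := fine (P [set w | X w <= x]).
Definition survival (x : R) : R := 1 - cdf x.

Definition lsupp : \bar R := ereal_inf [set x%:E | x in [set x : R | 0 < cdf x]].
Definition rsupp : \bar R := ereal_sup [set x%:E | x in [set x : R | 0 < survival x]].

Definition supp_itv : set R :=
  [set x : R | (lsupp < x%:E)%E /\ (x%:E < rsupp)%E].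

Definition CIGF (a b : R) : \bar R :=
  (\int[lebesgue_measure]_(x in supp_itv)
     ((cdf x `^ a) * (survival x `^ b))%:E)%E.

Definition CIGF_dom : set (R * R) := [set ab | (CIGF ab.1 ab.2 < +oo)%E].

(* H_X(alpha) = G_X(alpha,0),  K_X(beta) = G_X(0,beta) *)
Definition CIGM (a : R) : \bar R := CIGF a 0.
Definition CRIGM (b : R) : \bar R := CIGF 0 b.

End CIGF.

(* Main.v *)
Require Import Defs.
From HB Require Import structures.
From mathcomp Require Import all_boot all_order all_algebra.
From mathcomp Require Import all_classical all_reals all_analysis.
From mathcomp Require Import measurable_realfun lra.
Import Order.TTheory GRing.Theory Num.Theory.
Local Open Scope classical_set_scope.
Local Open Scope ring_scope.

Lemma bern (R : realType) (u a : R) : 0 < u -> 0 <= a <= 1 ->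
  u `^ a <= 1 - a * (1 - u).
Proof.
move=> u0 /andP[a0 a1].
have [->|an0] := eqVneq a 0; first by rewrite powRr0 mul0r subr0.
have [->|an1] := eqVneq a 1; first by rewrite powRr1 ?(ltW u0) // mul1r subKr.
have ap : 0 < a by rewrite lt_neqAle eq_sym an0 a0.
have a1' : a < 1 by rewrite lt_neqAle an1 a1.
have q0 : 0 < 1 - a by rewrite subr_gt0.
have := @conjugate_powR R (u `^ a) 1 (a^-1) ((1 - a)^-1) (powR_ge0 _ _) ler01.
rewrite !invr_gt0 ap q0 !invrK => /(_ isT isT).
rewrite subrKC => /(_ erefl).
rewrite -powRrM mulfV ?gt_eqF // powRr1 ?(ltW u0) // powR1 mul1r => H.
rewrite ?mulr1 ?mul1r in H.
by apply: (le_trans H); lra.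
Qed.

Lemma int_ineq (R : realType) (D : set R) (mD : measurable D) (f g h : R -> R) (c : R) :
  0 <= c -> (forall x, D x -> 0 <= f x) -> (forall x, D x -> 0 <= h x) ->
  measurable_fun D f -> measurable_fun D g -> measurable_fun D h ->
  (forall x, D x -> f x + c * h x <= g x) ->
  (\int[@lebesgue_measure R]_(x in D) (h x)%:E < +oo)%E ->
  (\int[@lebesgue_measure R]_(x in D) (f x)%:E <=
   \int[@lebesgue_measure R]_(x in D) (g x)%:E -
   c%:E * \int[@lebesgue_measure R]_(x in D) (h x)%:E)%E.
Proof.
move=> c0 f0 h0 mf mg mh fgh hfin.
have hge0 : (0 <= \int[@lebesgue_measure R]_(x in D) (h x)%:E)%E.
  by apply: integral_ge0 => x Dx; rewrite lee_fin h0.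
have mch : measurable_fun D (fun x => c%:E * (h x)%:E)%E.
  apply: emeasurable_funM; [exact: measurable_cst|exact/measurable_EFinP].
have H : (\int[@lebesgue_measure R]_(x in D) ((f x)%:E + c%:E * (h x)%:E) <=
          \int[@lebesgue_measure R]_(x in D) (g x)%:E)%E.
  apply: ge0_le_integral.
  - exact: mD.
  - by move=> x Dx; rewrite adde_ge0 ?mule_ge0 ?lee_fin ?f0 ?h0.
  - by apply: emeasurable_funD => //; exact/measurable_EFinP.
  - exact/measurable_EFinP.
  - by move=> x Dx; rewrite -EFinM -EFinD lee_fin fgh.
have mf' : measurable_fun D (fun x => (f x)%:E) by exact/measurable_EFinP.
have mh' : measurable_fun D (fun x => (h x)%:E) by exact/measurable_EFinP.
have f0' : forall x, D x -> (0 <= (f x)%:E)%E by move=> x Dx; rewrite lee_fin f0.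
have h0' : forall x, D x -> (0 <= (h x)%:E)%E by move=> x Dx; rewrite lee_fin h0.
have ch0 : forall x, D x -> (0 <= c%:E * (h x)%:E)%E.
  by move=> x Dx; rewrite mule_ge0 ?lee_fin ?h0.
rewrite (ge0_integralD (@lebesgue_measure R) mD f0' mf' ch0 mch) in H.
rewrite (ge0_integralZl_EFin (@lebesgue_measure R) mD h0' mh' c0) in H.
rewrite leeBrDr //.
rewrite fin_numM //.
by rewrite ge0_fin_numE.
Qed.

Section Props.
Context (d : measure_display) (T : measurableType d) (R : realType)
  (P : probability T R) (X : {RV P >-> R}).

Lemma mset (x : R) : measurable [set w | X w <= x].
Proof.
have := measurable_funPT X measurableT _ (measurable_itv `]-oo, x]).
rewrite setTI; congr measurable; apply/seteqP; split => w /=;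
  by rewrite in_itv /=.
Qed.

Lemma cdf_nd : {homo Defs.cdf X : x y / x <= y}.
Proof.
move=> x y xy; rewrite /Defs.cdf; apply: fine_le.
- exact: fin_num_measure (mset x).
- exact: fin_num_measure (mset y).
- apply: le_measure; rewrite ?inE; try exact: mset.
  by move=> w /= /le_trans; apply.
Qed.

Lemma cdf_ge0 x : 0 <= Defs.cdf X x.
Proof. by rewrite /Defs.cdf fine_ge0 // measure_ge0. Qed.

Lemma cdf_le1 x : Defs.cdf X x <= 1.
Proof.
rewrite /Defs.cdf -lee_fin fineK; first exact: probability_le1 (mset x).
exact: fin_num_measure (mset x).
Qed.

Lemma supp_pos x : supp_itv X x -> 0 < Defs.cdf X x /\ 0 < survival X x.
Proof.
move=> [lx xr]; split.
- have [_ [y /= cy <-] yx] := ereal_inf_lt lx.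
  by apply: (lt_le_trans cy); apply: cdf_nd; rewrite -lee_fin ltW.
- have [_ [y /= sy <-] xy] := ereal_sup_gt xr.
  apply: (lt_le_trans sy); rewrite /survival lerB //; apply: cdf_nd.
  by rewrite -lee_fin ltW.
Qed.

Lemma msupp : measurable (supp_itv X).
Proof.
apply: is_interval_measurable => x y [lx _] [_ yr] z /andP[xz zy]; split.
- by apply: (lt_le_trans lx); rewrite lee_fin.
- by apply: (le_lt_trans _ yr); rewrite lee_fin.
Qed.

Lemma mcdf : measurable_fun (supp_itv X) (Defs.cdf X).
Proof. exact: nondecreasing_measurable msupp cdf_nd. Qed.

Lemma msurv : measurable_fun (supp_itv X) (survival X).
Proof.
apply: nonincreasing_measurable msupp _ => x y xy.
by rewrite /survival lerB // cdf_nd.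
Qed.

Lemma mpow a b : measurable_fun (supp_itv X)
  (fun x => Defs.cdf X x `^ a * survival X x `^ b).
Proof.
apply: (@measurable_funM _ _ _ _ (fun x => Defs.cdf X x `^ a) (fun x => survival X x `^ b)).
- exact: (measurableT_comp (measurable_powR a) mcdf).
- exact: (measurableT_comp (measurable_powR b) msurv).
Qed.

End Props.

Theorem proposition5 (d : measure_display) (T : measurableType d) (R : realType)
  (P : probability T R) (X : {RV P >-> R}) :
  (forall a b : R, (a, b) \in CIGF_dom X -> 0 <= a <= 1 ->
     (CRIGM X (b + 1) < +oo)%E ->
     (CIGF X a b <= CRIGM X b - a%:E * CRIGM X (b + 1))%E) /\
  (forall a b : R, (a, b) \in CIGF_dom X -> 0 <= b <= 1 ->
     (CIGM X (a + 1) < +oo)%E ->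
     (CIGF X a b <= CIGM X a - b%:E * CIGM X (a + 1))%E).
Proof.
split.
- move=> a b _ a01 Kfin; rewrite /CRIGM /CIGF in Kfin *.
  have /andP[a0 a1] := a01.
  apply: int_ineq => //.
  + exact: msupp.
  + by move=> x _; rewrite mulr_ge0 ?powR_ge0.
  + by move=> x _; rewrite mulr_ge0 ?powR_ge0.
  + exact: mpow.
  + exact: mpow.
  + exact: mpow.
  + move=> x /supp_pos [F0 v0].
    rewrite !powRr0 !mul1r powRD; last by rewrite (gt_eqF v0) implybT.
    rewrite powRr1 ?(ltW v0) //.
    have B : Defs.cdf X x `^ a <= 1 - a * survival X x := @bern R _ _ F0 a01.
    have vb := powR_ge0 (survival X x) b.
    have : Defs.cdf X x `^ a * survival X x `^ b <=
           (1 - a * survival X x) * survival X x `^ b.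
      by apply: ler_wpM2r.
    nra.
- move=> a b _ b01 Hfin; rewrite /CIGM /CIGF in Hfin *.
  have /andP[b0 b1] := b01.
  apply: int_ineq => //.
  + exact: msupp.
  + by move=> x _; rewrite mulr_ge0 ?powR_ge0.
  + by move=> x _; rewrite mulr_ge0 ?powR_ge0.
  + exact: mpow.
  + exact: mpow.
  + exact: mpow.
  + move=> x /supp_pos [F0 v0].
    rewrite !powRr0 !mulr1 powRD; last by rewrite (gt_eqF F0) implybT.
    rewrite powRr1 ?(ltW F0) //.
    have B : survival X x `^ b <= 1 - b * Defs.cdf X x.
      by have := @bern R _ _ v0 b01; rewrite /survival subKr.
    have Fa := powR_ge0 (Defs.cdf X x) a.
    have : Defs.cdf X x `^ a * survival X x `^ b <=
           Defs.cdf X x `^ a * (1 - b * Defs.cdf X x).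
      by apply: ler_wpM2l.
    nra.
Qed.
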